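(* Let $\mathcal P\subseteq\mathcal G$ be a group property. If $\mathcal P$ has the Baire property as a subset of $\mathcal G$, then $\mathcal P$ is either meager or comeager in $\mathcal G$.
   Context: Let $\mathbb N=\{1,2,3,\dots\}$. Equip $\mathbb N^{\mathbb N\times\mathbb N}$ (the set of infinite tables of natural numbers) with the product topology of the discrete topology on $\mathbb N$. Let $\mathcal G$ be the subspace consisting of those $A\in\mathbb N^{\mathbb N\times\mathbb N}$ that are the multiplication table of a group on the underlying set $\mathbb N$ whose identity element is $1$ (i.e. $A(n,m)$ is the product $n\cdot m$). For $G\in\mathcal G$, $\overline G$ denotes the group on $\mathbb N$ with multiplication table $G$. A group property is a set $\mathcal P\subseteq\mathcal G$ that is invariant under isomorphism: if $G\in\mathcal G$, $H\in\mathcal P$ and $\overline G\cong\overline H$, then $G\in\mathcal P$. A set has the Baire property if it is the symmetric difference of an open set and a meager set. *)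

(* Defs.v *)
From Stdlib Require Import Arith.

Definition Npos : Type := { n : nat | 0 < n }.
Definition one : Npos := exist _ 1 Nat.lt_0_1.

Definition table : Type := Npos -> Npos -> Npos.

Definition is_group_table (A : table) : Prop :=
  (forall x y z, A (A x y) z = A x (A y z)) /\
  (forall x, A one x = x /\ A x one = x) /\
  (forall x, exists y, A x y = one /\ A y x = one).

Definition Gsp (A : table) : Prop := is_group_table A.

Definition group_iso (A B : table) : Prop :=
  exists (f g : Npos -> Npos),
    (forall x, g (f x) = x) /\ (forall y, f (g y) = y) /\
    (forall x y, f (A x y) = B (f x) (f y)).

Definition group_property (P : table -> Prop) : Prop :=
  (forall A, P A -> Gsp A) /\
  (forall A B, Gsp A -> P B -> group_iso A B -> P A).

(* A and B agree on the finite block {1..n} x {1..n}; these blocks give the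
   basic open sets (cylinders) of the product of discrete topologies. *)
Definition agree (n : nat) (A B : table) : Prop :=
  forall i j : Npos, proj1_sig i <= n -> proj1_sig j <= n -> A i j = B i j.

(* Open sets of the subspace topology on G (relative to the product topology). *)
Definition openG (U : table -> Prop) : Prop :=
  (forall A, U A -> Gsp A) /\
  (forall A, U A -> exists n, forall B, Gsp B -> agree n A B -> U B).

Definition closureG (S : table -> Prop) (A : table) : Prop :=
  Gsp A /\ forall U, openG U -> U A -> exists B, U B /\ S B.

Definition interiorG (S : table -> Prop) (A : table) : Prop :=
  exists U, openG U /\ U A /\ (forall B, U B -> S B).

Definition nowhere_denseG (S : table -> Prop) : Prop :=
  (forall A, S A -> Gsp A) /\ (forall A, ~ interiorG (closureG S) A).

Definition meagerG (S : table -> Prop) : Prop :=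
  exists F : nat -> table -> Prop,
    (forall k, nowhere_denseG (F k)) /\
    (forall A, S A <-> exists k, F k A).

Definition comeagerG (S : table -> Prop) : Prop :=
  meagerG (fun A => Gsp A /\ ~ S A).

Definition baire_propertyG (S : table -> Prop) : Prop :=
  exists U M, openG U /\ meagerG M /\
    (forall A, S A <-> ((U A /\ ~ M A) \/ (M A /\ ~ U A))).

(* Main.v *)
Require Import Defs.
From Stdlib Require Import Arith Lia Bool Classical ClassicalEpsilon.
From Stdlib Require Cantor Peano_dec.
Arguments Cantor.to_nat : simpl never.
Arguments Cantor.of_nat : simpl never.

Definition toN (x : Npos) : nat := proj1_sig x - 1.
Definition ofN (a : nat) : Npos := exist _ (S a) (Nat.lt_0_succ a).

Lemma toN_ofN a : toN (ofN a) = a.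
Proof. unfold toN, ofN; simpl; lia. Qed.

Lemma ofN_toN x : ofN (toN x) = x.
Proof.
  destruct x as [[|x] px]. { exfalso; inversion px. }
  unfold ofN, toN; simpl. rewrite Nat.sub_0_r. f_equal. apply Peano_dec.le_unique.
Qed.

Lemma toN_inj x y : toN x = toN y -> x = y.
Proof. intros H. rewrite <- (ofN_toN x), <- (ofN_toN y), H. reflexivity. Qed.

Lemma toN_one : toN one = 0.
Proof. reflexivity. Qed.

Lemma le_toN (i : Npos) n : proj1_sig i <= n -> toN i < n.
Proof. destruct i as [x px]; unfold toN; simpl; lia. Qed.

Lemma agree_refl n A : agree n A A.
Proof. intros i j _ _; reflexivity. Qed.
Lemma agree_sym n A B : agree n A B -> agree n B A.
Proof. intros H i j hi hj; symmetry; auto. Qed.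
Lemma agree_trans n A B C : agree n A B -> agree n B C -> agree n A C.
Proof. intros H1 H2 i j hi hj; rewrite H1; auto. Qed.
Lemma agree_ext n A B : (forall i j, A i j = B i j) -> agree n A B.
Proof. intros H i j _ _; auto. Qed.

Lemma bound_nat (h : nat -> nat) n : exists N, forall a, a <= n -> h a <= N.
Proof.
  induction n as [|n [N HN]].
  - exists (h 0). intros a Ha. assert (a = 0) by lia. subst; lia.
  - exists (Nat.max N (h (S n))). intros a Ha.
    destruct (Nat.eq_dec a (S n)) as [->|]; [lia|]. specialize (HN a ltac:(lia)). lia.
Qed.

Lemma bound_nat2 (h : nat -> nat -> nat) n :
  exists N, forall a b, a <= n -> b <= n -> h a b <= N.
Proof.
  induction n as [|n [N HN]].
  - exists (h 0 0). intros a b Ha Hb. assert (a = 0) by lia. assert (b = 0) by lia. subst; lia.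
  - destruct (bound_nat (fun b => h (S n) b) (S n)) as [R HR].
    destruct (bound_nat (fun a => h a (S n)) (S n)) as [C HC].
    exists (Nat.max N (Nat.max R C)). intros a b Ha Hb.
    destruct (Nat.eq_dec a (S n)) as [->|]. { specialize (HR b Hb). simpl in HR. lia. }
    destruct (Nat.eq_dec b (S n)) as [->|]. { specialize (HC a Ha). simpl in HC. lia. }
    specialize (HN a b ltac:(lia) ltac:(lia)). lia.
Qed.

Lemma bound_pos (h : Npos -> nat) n : exists N, forall i, proj1_sig i <= n -> h i <= N.
Proof.
  destruct (bound_nat (fun a => h (ofN a)) n) as [N HN]. exists N.
  intros i Hi. rewrite <- (ofN_toN i). apply HN. apply le_toN in Hi. lia.
Qed.

Lemma bound_pos2 (h : Npos -> Npos -> nat) n :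
  exists N, forall i j, proj1_sig i <= n -> proj1_sig j <= n -> h i j <= N.
Proof.
  destruct (bound_nat2 (fun a b => h (ofN a) (ofN b)) n) as [N HN]. exists N.
  intros i j Hi Hj. rewrite <- (ofN_toN i), <- (ofN_toN j). apply HN.
  apply le_toN in Hi; lia. apply le_toN in Hj; lia.
Qed.

Definition rl (f g : Npos -> Npos) (A : table) : table := fun x y => f (A (g x) (g y)).
Definition Bij (f g : Npos -> Npos) : Prop :=
  (forall x, g (f x) = x) /\ (forall y, f (g y) = y) /\ f one = one.

Lemma Bij_sym f g : Bij f g -> Bij g f.
Proof. intros [H1 [H2 H3]]. split; [|split]; auto. rewrite <- H3 at 1. rewrite H1; reflexivity. Qed.

Lemma rl_G f g A : Bij f g -> Gsp A -> Gsp (rl f g A).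
Proof.
  intros HB [Ha [Hi Hv]]. pose proof (Bij_sym _ _ HB) as [_ [_ Hg1]].
  destruct HB as [H1 [H2 H3]]. unfold rl.
  split; [|split].
  - intros x y z. rewrite !H1, Ha. reflexivity.
  - intros x. rewrite Hg1. destruct (Hi (g x)) as [E1 E2]. rewrite E1, E2, H2. auto.
  - intros x. destruct (Hv (g x)) as [y [E1 E2]]. exists (f y). rewrite H1, E1, E2, H3. auto.
Qed.

Lemma rl_inv f g A x y : Bij f g -> rl g f (rl f g A) x y = A x y.
Proof. intros [H1 [H2 H3]]. unfold rl. rewrite !H1. reflexivity. Qed.

Lemma rl_iso f g A : Bij f g -> group_iso A (rl g f A).
Proof.
  intros [H1 [H2 H3]]. exists g, f. split; [|split]; auto.
  intros x y. unfold rl. rewrite !H2. reflexivity.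
Qed.

Lemma rl_cont f g n : exists n', forall X Y, agree n' X Y -> agree n (rl f g X) (rl f g Y).
Proof.
  destruct (bound_pos (fun i => proj1_sig (g i)) n) as [N HN]. exists N.
  intros X Y H i j hi hj. unfold rl. rewrite H; auto.
Qed.

Definition cylG (A : table) (n : nat) : table -> Prop := fun B => Gsp B /\ agree n A B.

Lemma cyl_open A n : openG (cylG A n).
Proof.
  split. - intros B [H _]; auto.
  - intros B [_ HB]. exists n. intros C HC HBC. split; auto. eapply agree_trans; eauto.
Qed.

Lemma nd_intro S : (forall A, S A -> Gsp A) ->
  (forall A n, Gsp A -> exists B, Gsp B /\ agree n A B /\
      exists m, forall C, Gsp C -> agree m B C -> ~ S C) -> nowhere_denseG S.
Proof.
  intros HS H. split; auto. intros A [U [[HU1 HU2] [UA Hsub]]].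
  destruct (HU2 A UA) as [n Hn].
  destruct (H A n (HU1 A UA)) as [B [GB [AB [m Hm]]]].
  destruct (Hsub B (Hn B GB AB)) as [_ Hcl].
  destruct (Hcl (cylG B m) (cyl_open B m)) as [D [[GD BD] SD]].
  - split; auto using agree_refl.
  - exact (Hm D GD BD SD).
Qed.

Lemma nd_elim S A n : nowhere_denseG S -> Gsp A -> exists B, Gsp B /\ agree n A B /\
      exists m, forall C, Gsp C -> agree m B C -> ~ S C.
Proof.
  intros [HS Hnd] GA. apply NNPP. intros Hno. apply (Hnd A).
  exists (cylG A n). split; [apply cyl_open|]. split; [split; auto using agree_refl|].
  intros B [GB AB]. split; auto. intros V [HV1 HV2] VB.
  destruct (HV2 B VB) as [m Hm]. apply NNPP. intros Hnot. apply Hno.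
  exists B. split; auto. split; auto. exists m. intros C GC BC SC.
  apply Hnot. exists C. split; auto.
Qed.

Lemma nd_sub S T : nowhere_denseG S -> (forall A, T A -> S A) -> nowhere_denseG T.
Proof.
  intros HS HT. apply nd_intro.
  - intros A TA. apply (proj1 HS). auto.
  - intros A n GA. destruct (nd_elim S A n HS GA) as [B [GB [AB [m Hm]]]].
    exists B. split; [|split]; auto. exists m. intros C GC BC TC. apply (Hm C GC BC). auto.
Qed.

Lemma nd_image f g S : Bij f g -> nowhere_denseG S ->
  nowhere_denseG (fun A => Gsp A /\ S (rl g f A)).
Proof.
  intros HB HS. pose proof (Bij_sym _ _ HB) as HB'.
  apply nd_intro. { intros A [H _]; auto. }
  intros A n GA.
  destruct (rl_cont f g n) as [n' Hn'].
  destruct (nd_elim S (rl g f A) n' HS (rl_G _ _ _ HB' GA)) as [B' [GB' [AB' [m' Hm']]]].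
  exists (rl f g B'). split; [apply rl_G; auto|]. split.
  - eapply agree_trans; [|apply Hn'; exact AB']. apply agree_ext. intros i j.
    symmetry. apply rl_inv. auto.
  - destruct (rl_cont g f m') as [m Hm]. exists m. intros C GC BC [_ SC].
    apply (Hm' (rl g f C) (rl_G _ _ _ HB' GC)); auto.
    eapply agree_trans; [|apply Hm; exact BC]. apply agree_ext. intros i j.
    symmetry. apply rl_inv. auto.
Qed.

Definition ell (N : nat) (p : nat * nat) : nat :=
  let (a, b) := p in
  if (b =? 0) && (a <? N) then a
  else N + Cantor.to_nat (if b =? 0 then (a - N, 0) else (a, b)).

Definition ellinv (N z : nat) : nat * nat :=
  if z <? N then (z, 0) else
  let (a, b) := Cantor.of_nat (z - N) in
  if b =? 0 then (a + N, 0) else (a, b).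

Lemma ellinv_ell N p : ellinv N (ell N p) = p.
Proof.
  destruct p as [a b]. unfold ell.
  destruct (Nat.eqb_spec b 0) as [->|Hb]; simpl.
  - destruct (Nat.ltb_spec a N).
    + unfold ellinv. destruct (Nat.ltb_spec a N); [reflexivity|lia].
    + unfold ellinv. destruct (Nat.ltb_spec (N + Cantor.to_nat (a - N, 0)) N); [lia|].
      replace (N + Cantor.to_nat (a - N, 0) - N) with (Cantor.to_nat (a - N, 0)) by lia.
      rewrite Cantor.cancel_of_to. simpl. f_equal. lia.
  - unfold ellinv. destruct (Nat.ltb_spec (N + Cantor.to_nat (a, b)) N); [lia|].
    replace (N + Cantor.to_nat (a, b) - N) with (Cantor.to_nat (a, b)) by lia.
    rewrite Cantor.cancel_of_to. destruct (Nat.eqb_spec b 0); [lia|reflexivity].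
Qed.

Lemma ell_ellinv N z : ell N (ellinv N z) = z.
Proof.
  unfold ellinv. destruct (Nat.ltb_spec z N).
  - simpl. destruct (Nat.ltb_spec z N); [reflexivity|lia].
  - destruct (Cantor.of_nat (z - N)) as [a b] eqn:E.
    destruct (Nat.eqb_spec b 0) as [->|Hb]; simpl.
    + destruct (Nat.ltb_spec (a + N) N); [lia|]. simpl.
      replace (a + N - N) with a by lia. rewrite <- E, Cantor.cancel_to_of. lia.
    + destruct (Nat.eqb_spec b 0); [lia|]. simpl. rewrite <- E, Cantor.cancel_to_of. lia.
Qed.

Lemma ellinv_small N z : z < N -> ellinv N z = (z, 0).
Proof. intros H. unfold ellinv. destruct (Nat.ltb_spec z N); [reflexivity|lia]. Qed.

Section Lam.
Variable N : nat.
Definition lam (x y : Npos) : Npos := ofN (ell N (toN x, toN y)).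
Definition lam1 (z : Npos) : Npos := ofN (fst (ellinv N (toN z))).
Definition lam2 (z : Npos) : Npos := ofN (snd (ellinv N (toN z))).

Lemma lam_eta z : lam (lam1 z) (lam2 z) = z.
Proof.
  unfold lam, lam1, lam2. rewrite !toN_ofN. rewrite <- surjective_pairing.
  rewrite ell_ellinv. apply ofN_toN.
Qed.
Lemma lam1_lam x y : lam1 (lam x y) = x.
Proof. unfold lam, lam1. rewrite toN_ofN, ellinv_ell. apply ofN_toN. Qed.
Lemma lam2_lam x y : lam2 (lam x y) = y.
Proof. unfold lam, lam2. rewrite toN_ofN, ellinv_ell. apply ofN_toN. Qed.
Lemma lam1_small z : toN z < N -> lam1 z = z.
Proof. intros H. unfold lam1. rewrite ellinv_small; auto. apply ofN_toN. Qed.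
Lemma lam2_small z : toN z < N -> lam2 z = one.
Proof. intros H. unfold lam2. rewrite ellinv_small; auto. apply toN_inj. rewrite toN_ofN. reflexivity. Qed.
Lemma lam_small x : toN x < N -> lam x one = x.
Proof.
  intros H. unfold lam. rewrite toN_one. unfold ell. simpl.
  destruct (Nat.ltb_spec (toN x) N); [|lia]. apply ofN_toN.
Qed.
End Lam.

Definition prodT N (A A0 : table) : table :=
  fun x y => lam N (A (lam1 N x) (lam1 N y)) (A0 (lam2 N x) (lam2 N y)).

Lemma prodT_G N A A0 : 0 < N -> Gsp A -> Gsp A0 -> Gsp (prodT N A A0).
Proof.
  intros HN [Aa [Ai Av]] [Ba [Bi Bv]]. unfold prodT.
  assert (H1 : lam1 N one = one) by (apply lam1_small; rewrite toN_one; lia).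
  assert (H2 : lam2 N one = one) by (apply lam2_small; rewrite toN_one; lia).
  split; [|split].
  - intros x y z. rewrite !lam1_lam, !lam2_lam, Aa, Ba. reflexivity.
  - intros x. rewrite H1, H2. destruct (Ai (lam1 N x)) as [-> ->].
    destruct (Bi (lam2 N x)) as [-> ->]. rewrite lam_eta. auto.
  - intros x. destruct (Av (lam1 N x)) as [y1 [E1 E2]]. destruct (Bv (lam2 N x)) as [y2 [F1 F2]].
    exists (lam N y1 y2). rewrite !lam1_lam, !lam2_lam, E1, E2, F1, F2.
    assert (H3 : lam N one one = one) by (apply lam_small; rewrite toN_one; lia).
    rewrite H3; auto.
Qed.

Definition swp N (k : Npos) : Npos := lam N (lam2 N k) (lam1 N k).

Lemma swp_Bij N : 0 < N -> Bij (swp N) (swp N).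
Proof.
  intros HN. assert (forall k, swp N (swp N k) = k).
  { intros k. unfold swp. rewrite lam1_lam, lam2_lam. apply lam_eta. }
  split; [|split]; auto. unfold swp.
  rewrite lam1_small, lam2_small by (rewrite toN_one; lia). apply lam_small. rewrite toN_one; lia.
Qed.

Lemma prod_constr A A0 n n0 : Gsp A -> Gsp A0 ->
  exists B f, Gsp B /\ agree n A B /\ Bij f f /\ agree n0 A0 (rl f f B).
Proof.
  intros GA GA0.
  destruct (bound_pos2 (fun i j => toN (A i j)) n) as [N1 HN1].
  destruct (bound_pos2 (fun i j => toN (A0 i j)) n0) as [N2 HN2].
  set (N := S (n + n0 + N1 + N2)).
  assert (HN : 0 < N) by (unfold N; lia).
  exists (prodT N A A0), (swp N). split; [apply prodT_G; auto|]. split; [|split].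
  - intros i j hi hj. unfold prodT.
    pose proof (le_toN _ _ hi). pose proof (le_toN _ _ hj). specialize (HN1 i j hi hj).
    rewrite !lam1_small, !lam2_small by (unfold N; lia).
    destruct GA0 as [_ [Hi _]]. destruct (Hi one) as [-> _].
    symmetry. apply lam_small. unfold N; lia.
  - apply swp_Bij; auto.
  - intros i j hi hj.
    pose proof (le_toN _ _ hi). pose proof (le_toN _ _ hj). specialize (HN2 i j hi hj).
    assert (Si : swp N i = lam N one i) by (unfold swp; rewrite lam1_small, lam2_small by (unfold N; lia); reflexivity).
    assert (Sj : swp N j = lam N one j) by (unfold swp; rewrite lam1_small, lam2_small by (unfold N; lia); reflexivity).
    unfold rl, prodT. rewrite Si, Sj, !lam1_lam, !lam2_lam.
    destruct GA as [_ [Hi _]]. destruct (Hi one) as [-> _].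
    unfold swp. rewrite lam1_lam, lam2_lam. symmetry. apply lam_small. unfold N; lia.
Qed.

Definition dec (k i : nat) : nat :=
  fst (Cantor.of_nat (Nat.iter i (fun k => snd (Cantor.of_nat k)) k)).

Lemma dec_surj L : forall (h : nat -> nat), exists k, forall i, i <= L -> dec k i = h i.
Proof.
  induction L as [|L IH]; intros h.
  - exists (Cantor.to_nat (h 0, 0)). intros i Hi. assert (i = 0) by lia. subst.
    unfold dec. simpl. rewrite Cantor.cancel_of_to. reflexivity.
  - destruct (IH (fun i => h (S i))) as [k' Hk'].
    exists (Cantor.to_nat (h 0, k')). intros [|i] Hi.
    + unfold dec. simpl. rewrite Cantor.cancel_of_to. reflexivity.
    + rewrite <- (Hk' i ltac:(lia)). unfold dec. rewrite Nat.iter_succ_r.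
      rewrite Cantor.cancel_of_to. reflexivity.
Qed.

Definition Tab (k : nat) : table := fun x y => ofN (dec k (Cantor.to_nat (toN x, toN y))).

Lemma tab_surj A m : exists k, agree m (Tab k) A.
Proof.
  destruct (bound_nat2 (fun a b => Cantor.to_nat (a, b)) m) as [L HL].
  destruct (dec_surj L (fun idx => toN (A (ofN (fst (Cantor.of_nat idx))) (ofN (snd (Cantor.of_nat idx))))))
    as [k Hk].
  exists k. intros i j hi hj. unfold Tab.
  pose proof (le_toN _ _ hi). pose proof (le_toN _ _ hj).
  rewrite Hk by (apply HL; lia). rewrite Cantor.cancel_of_to. simpl.
  rewrite !ofN_toN. reflexivity.
Qed.

Definition FP := ((Npos -> Npos) * (Npos -> Npos))%type.

Theorem theorem5p3 (P : table -> Prop) :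
  group_property P -> baire_propertyG P -> meagerG P \/ comeagerG P.
Proof.
  intros [PG Pinv] [U [M [HU [[F [HF HMF]] HP]]]].
  destruct (classic (exists A0, U A0)) as [[A0 UA0] | HnU].
  2:{ left. exists F. split; auto. intros A. rewrite HP, <- HMF. split.
      - intros [[UA _]|[MA _]]; [exfalso; eauto|exact MA].
      - intros MA. right. split; auto. intros UA; eauto. }
  right.
  destruct HU as [HU1 HU2]. destruct (HU2 A0 UA0) as [n0 Hn0].
  set (good := fun c (p : FP) => Bij (fst p) (snd p) /\ forall C, Gsp C ->
         agree (fst (Cantor.of_nat c)) (Tab (snd (Cantor.of_nat c))) C -> U (rl (snd p) (fst p) C)).
  set (pk := fun c => epsilon (inhabits ((fun x : Npos => x), (fun x : Npos => x))) (good c)).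
  set (W := fun A => Gsp A /\ exists f g m, Bij f g /\ forall C, Gsp C -> agree m A C -> U (rl g f C)).
  set (H := fun k A => match k with
                       | 0 => Gsp A /\ ~ W A
                       | S k' => let (c, j) := Cantor.of_nat k' in
                                 Gsp A /\ good c (pk c) /\ F j (rl (snd (pk c)) (fst (pk c)) A)
                       end).
  assert (HND : forall k, nowhere_denseG (H k)).
  { intros [|k'].
    - apply nd_intro. { intros A [GA _]; auto. }
      intros A n GA. destruct (prod_constr A A0 n n0 GA (HU1 A0 UA0)) as [B [f [GB [AB [Bf Hf]]]]].
      destruct (rl_cont f f n0) as [m Hm].
      exists B. split; auto. split; auto. exists m. intros C GC BC [_ HW]. apply HW.
      split; auto. exists f, f, m. split; auto. intros D GD CD.
      apply Hn0. apply rl_G; auto. eapply agree_trans; [exact Hf|]. apply Hm.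
      eapply agree_trans; eauto.
    - unfold H. destruct (Cantor.of_nat k') as [c j].
      destruct (classic (good c (pk c))) as [Hg|Hg].
      + eapply nd_sub. apply (nd_image (fst (pk c)) (snd (pk c)) (F j) (proj1 Hg) (HF j)).
        intros A [GA [_ FA]]. split; auto.
      + eapply nd_sub. apply (HF j). intros A [_ [Hg' _]]. contradiction. }
  exists (fun k A => (Gsp A /\ ~ P A) /\ H k A). split.
  { intros k. eapply nd_sub. apply (HND k). intros A [_ HA]; exact HA. }
  intros A. split; [|intros [k [HA _]]; exact HA].
  intros [GA nPA]. destruct (classic (W A)) as [HW|HW].
  2:{ exists 0. split; [split; auto|]. simpl. split; auto. }
  destruct HW as [_ [f [g [m [Bfg HUm]]]]].
  destruct (tab_surj A m) as [t Ht].
  set (c := Cantor.to_nat (m, t)).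
  assert (Hgood : good c (pk c)).
  { unfold pk. apply epsilon_spec. exists (f, g). split; auto.
    intros C GC. unfold c. rewrite Cantor.cancel_of_to. simpl. intros HC.
    apply HUm; auto. eapply agree_trans; [apply agree_sym; exact Ht|exact HC]. }
  destruct Hgood as [Bp Up].
  assert (UA : U (rl (snd (pk c)) (fst (pk c)) A)).
  { apply Up; auto. unfold c. rewrite Cantor.cancel_of_to. exact Ht. }
  assert (nP : ~ P (rl (snd (pk c)) (fst (pk c)) A)).
  { intros HPA. apply nPA. eapply Pinv; eauto. apply rl_iso. exact Bp. }
  assert (MA : M (rl (snd (pk c)) (fst (pk c)) A)).
  { apply NNPP. intros nM. apply nP. apply HP. left. split; auto. }
  apply HMF in MA. destruct MA as [j Fj].
  exists (S (Cantor.to_nat (c, j))). split; [split; auto|].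
  simpl. rewrite Cantor.cancel_of_to. split; auto. split; auto. split; auto.
Qed.
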